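(* Let $n=p+q\geq 3$, let $\mathfrak g=\mathfrak{so}(p+1,q+1)$ with the $|1|$-grading described below, and let $Z\in\mathfrak g_1$ satisfy $\langle Z,Z\rangle\neq 0$. Then: (1) $0=C(Z)\subset F(Z)=\{X\in\mathfrak g_{-1}: ZX=\langle X,X\rangle=0\}$ and $T(Z)=\left\{\frac{2}{\langle Z,Z\rangle}\mathbb I Z^t\right\}$. (2) For the unique element $X\in T(Z)$, the bracket $A=[Z,X]\in\mathfrak g_0$ is twice the grading element of $\mathfrak g$. In particular, $A$ acts diagonalizably on $\mathfrak g_{-1}$ and on each $\mathbb W$ in the list below, all eigenvalues of $A$ on $\mathfrak g_{-1}$ are non-positive with $0$-eigenspace equal to $C(Z)$, $\mathbb W_{ss}(A)=0$, and $\bigcap_{X\in T(Z)}\mathbb W_{st}(A)=0$ for each such $\mathbb W$.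
   Context: Let $\mathbb I=\mathrm{Id}_p\oplus(-\mathrm{Id}_q)$. Realize $\mathfrak g=\mathfrak{so}(p+1,q+1)$ as the matrices $\begin{pmatrix} a & Z & 0\\ X & A & -\mathbb I Z^t\\ 0 & -X^t\mathbb I & -a\end{pmatrix}$ with $a\in\mathbb R$, $X\in\mathbb R^n$ (column), $Z\in\mathbb R^{n*}$ (row), $A\in\mathfrak{so}(p,q)$; bracket is the matrix commutator. The components $\mathfrak g_{-1},\mathfrak g_0,\mathfrak g_1$ are given by $X$, $(A,a)$ and $Z$ respectively. $ZX$ is the real number given by the matrix product; $\langle X,Y\rangle=X^t\mathbb IY$ on $\mathfrak g_{-1}$ and $\langle Z,W\rangle=Z\mathbb IW^t$ on $\mathfrak g_1$. The grading element is the unique $E\in\mathfrak g$ with $\mathrm{ad}(E)=i$ on $\mathfrak g_i$, $i=-1,0,1$. For $Z\in\mathfrak g_1$: $C(Z)=\{X\in\mathfrak g_{-1}:[X,Z]=0\}$, $F(Z)=\{X\in\mathfrak g_{-1}:[X,[X,Z]]=0\}$, $T(Z)=\{X\in\mathfrak g_{-1}:[[Z,X],X]=-2X,\ [[Z,X],Z]=2Z\}$. The representations $\mathbb W$ of $\mathfrak g_0\cong\mathfrak{co}(p,q)$ carrying harmonic curvature: for $n\geq5$, the irreducible component of highest weight in $\Lambda^2\mathfrak g_1\otimes\mathfrak{so}(\mathfrak g_{-1})$ (Weyl tensors); for $n=3$, the irreducible component of highest weight in $\Lambda^2\mathfrak g_1\otimes\mathfrak g_1$ (Cotton–York tensors);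 for $n=4$, the two components of the Weyl-tensor space corresponding to the self-dual and anti-self-dual parts of $\Lambda^2\mathfrak g_1$. For $A$ acting diagonalizably on $\mathbb W$, $\mathbb W_{ss}(A)$ (resp. $\mathbb W_{st}(A)$) is the sum of the eigenspaces with negative (resp. non-positive) eigenvalues. *)

(* Defs.v *)
From HB Require Import structures.
From mathcomp Require Import all_boot all_order all_algebra.
Import Order.TTheory GRing.Theory Num.Theory.
Local Open Scope ring_scope.

Section Defs.
Variable R : realFieldType.

Definition Ib (p q : nat) : 'M[R]_(p + q) := block_mx 1%:M 0 0 (- 1%:M).

Definition so_pq (p q : nat) (A : 'M[R]_(p + q)) : Prop :=
  A^T *m Ib p q + Ib p q *m A = 0.

(* the matrix  ( a  Z  0 ; X  A  -𝕀Z^t ; 0  -X^t𝕀  -a ) *)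
Definition gm (p q : nat) (a : R) (X : 'cV[R]_(p + q)) (Z : 'rV[R]_(p + q))
  (A : 'M[R]_(p + q)) : 'M[R]_(1 + (p + q) + 1) :=
  block_mx (block_mx a%:M Z X A)
           (col_mx 0 (- (Ib p q *m Z^T)))
           (row_mx 0 (- (X^T *m Ib p q)))
           (- a)%:M.

Definition in_g (p q : nat) (M : 'M[R]_(1 + (p + q) + 1)) : Prop :=
  exists a X Z A, so_pq p q A /\ M = gm p q a X Z A.

Definition gneg (p q : nat) (X : 'cV[R]_(p + q)) := gm p q 0 X 0 0.
Definition gpos (p q : nat) (Z : 'rV[R]_(p + q)) := gm p q 0 0 Z 0.
Definition gzero (p q : nat) (a : R) (A : 'M[R]_(p + q)) := gm p q a 0 0 A.

Definition br {m : nat} (M N : 'M[R]_m) : 'M[R]_m := M *m N - N *m M.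

Definition pairZX (p q : nat) (Z : 'rV[R]_(p + q)) (X : 'cV[R]_(p + q)) : R :=
  (Z *m X) 0 0.
Definition innerV (p q : nat) (X Y : 'cV[R]_(p + q)) : R :=
  (X^T *m Ib p q *m Y) 0 0.
Definition innerW (p q : nat) (Z W : 'rV[R]_(p + q)) : R :=
  (Z *m Ib p q *m W^T) 0 0.

Definition is_grading_element (p q : nat) (E : 'M[R]_(1 + (p + q) + 1)) : Prop :=
  [/\ in_g p q E,
      (forall X, br E (gneg p q X) = - gneg p q X),
      (forall a A, so_pq p q A -> br E (gzero p q a A) = 0) &
      (forall Z, br E (gpos p q Z) = gpos p q Z)].

Definition Cset (p q : nat) (Z : 'rV[R]_(p + q)) (X : 'cV[R]_(p + q)) : Prop :=
  br (gneg p q X) (gpos p q Z) = 0.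
Definition Fset (p q : nat) (Z : 'rV[R]_(p + q)) (X : 'cV[R]_(p + q)) : Prop :=
  br (gneg p q X) (br (gneg p q X) (gpos p q Z)) = 0.
Definition Tset (p q : nat) (Z : 'rV[R]_(p + q)) (X : 'cV[R]_(p + q)) : Prop :=
  br (br (gpos p q Z) (gneg p q X)) (gneg p q X) = - (2 *: gneg p q X) /\
  br (br (gpos p q Z) (gneg p q X)) (gpos p q Z) = 2 *: gpos p q Z.

Definition actV (p q : nat) (A : 'M[R]_(1 + (p + q) + 1)) (X : 'cV[R]_(p + q))
  : 'cV[R]_(p + q) := dlsubmx (ulsubmx (br A (gneg p q X))).
Definition actW (p q : nat) (A : 'M[R]_(1 + (p + q) + 1)) (Z : 'rV[R]_(p + q))
  : 'rV[R]_(p + q) := ursubmx (ulsubmx (br A (gpos p q Z))).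
Definition rhoV (p q : nat) (A : 'M[R]_(1 + (p + q) + 1)) : 'M[R]_(p + q) :=
  \matrix_(k, l) (actV p q A (delta_mx l 0)) k 0.
(* action on the dual basis e^i of g_1 : A.e^i = sum_k cW i k e^k *)
Definition cW (p q : nat) (A : 'M[R]_(1 + (p + q) + 1)) (i k : 'I_(p + q)) : R :=
  (actW p q A (delta_mx 0 i)) 0 k.

(* Λ²g_1 ⊗ so(g_{-1}) ⊂ g_1 ⊗ g_1 ⊗ gl(g_{-1}) : T = sum_{ij} e^i ⊗ e^j ⊗ t(i,j) *)
Definition tens4 (n : nat) := {ffun 'I_n * 'I_n -> 'M[R]_n}.
(* Λ²g_1 ⊗ g_1 ⊂ g_1^{⊗3} : T = sum_{ijk} t(i,j,k) e^i ⊗ e^j ⊗ e^k *)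
Definition tens3 (n : nat) := {ffun 'I_n * 'I_n * 'I_n -> R^o}.

Definition act4 (p q : nat) (A : 'M[R]_(1 + (p + q) + 1)) (t : tens4 (p + q))
  : tens4 (p + q) :=
  [ffun kl : 'I_(p + q) * 'I_(p + q) =>
     \sum_i cW p q A i kl.1 *: t (i, kl.2) + \sum_j cW p q A j kl.2 *: t (kl.1, j)
     + (rhoV p q A *m t kl - t kl *m rhoV p q A)].

Definition act3 (p q : nat) (A : 'M[R]_(1 + (p + q) + 1)) (t : tens3 (p + q))
  : tens3 (p + q) :=
  [ffun klm : 'I_(p + q) * 'I_(p + q) * 'I_(p + q) =>
     \sum_i cW p q A i klm.1.1 * t (i, klm.1.2, klm.2)
     + \sum_j cW p q A j klm.1.2 * t (klm.1.1, j, klm.2)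
     + \sum_r cW p q A r klm.2 * t (klm.1.1, klm.1.2, r)].

Definition weyl_tensor (p q : nat) (t : tens4 (p + q)) : Prop :=
  [/\ (forall i j, t (i, j) = - t (j, i)),
      (forall i j, so_pq p q (t (i, j))),
      (forall i j l k, t (i, j) k l + t (j, l) k i + t (l, i) k j = 0) &
      (forall j l, \sum_i t (i, j) i l = 0)].

Definition cy_tensor (p q : nat) (t : tens3 (p + q)) : Prop :=
  [/\ (forall i j k, t (i, j, k) = - t (j, i, k)),
      (forall i j k, t (i, j, k) + t (j, k, i) + t (k, i, j) = 0) &
      (forall j, \sum_i Ib p q i i * t (i, j, i) = 0)].

End Defs.

Section Lin.
Variables (R : realFieldType) (V : lmodType R).

Definition subspace (W : V -> Prop) : Prop :=
  [/\ W 0, (forall u v, W u -> W v -> W (u + v)) &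
      (forall (c : R) u, W u -> W (c *: u))].

Definition diagonalizable_on (W : V -> Prop) (f : V -> V) : Prop :=
  forall w, W w -> exists s : seq (R * V),
    (forall x, x \in s -> W x.2 /\ f x.2 = x.1 *: x.2) /\
    w = \sum_(x <- s) x.2.

Definition eigen_sum (P : R -> bool) (W : V -> Prop) (f : V -> V) (v : V) : Prop :=
  exists s : seq (R * V),
    (forall x, x \in s -> [/\ W x.2, f x.2 = x.1 *: x.2 & P x.1]) /\
    v = \sum_(x <- s) x.2.

Definition W_ss (W : V -> Prop) (f : V -> V) := eigen_sum (fun l => l < 0) W f.
Definition W_st (W : V -> Prop) (f : V -> V) := eigen_sum (fun l => l <= 0) W f.

End Lin.
Arguments subspace {R V}.
Arguments diagonalizable_on {R V}.
Arguments eigen_sum {R V}.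
Arguments W_ss {R V}.
Arguments W_st {R V}.

Definition harmonic_component (R : realFieldType) (V : lmodType R)
  (p q : nat) (act : 'M[R]_(1 + (p + q) + 1) -> V -> V) (H : V -> Prop)
  (W : V -> Prop) : Prop :=
  let inv (U : V -> Prop) := forall a A, so_pq R p q A -> forall w, U w -> U (act (gzero R p q a A) w) in
  [/\ subspace W, (forall w, W w -> H w), inv W,
      (exists w, W w /\ w <> 0) &
      (forall U, subspace U -> inv U -> (forall w, U w -> W w) ->
          (forall w, U w -> w = 0) \/ (forall w, W w -> U w))].
Arguments br {R m}.
Arguments harmonic_component {R V}.

(* Main.v *)
Require Import Defs.
From HB Require Import structures.
From mathcomp Require Import all_boot all_order all_algebra.
From mathcomp Require Import ring.
Import Order.TTheory GRing.Theory Num.Theory.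
Local Open Scope ring_scope.

Section B3.
Variables (R : realFieldType) (n : nat).
Definition b3 (m00 : 'M[R]_1) (m01 : 'M[R]_(1,n)) (m02 : 'M[R]_1)
  (m10 : 'M[R]_(n,1)) (m11 : 'M[R]_n) (m12 : 'M[R]_(n,1))
  (m20 : 'M[R]_1) (m21 : 'M[R]_(1,n)) (m22 : 'M[R]_1) : 'M[R]_(1 + n + 1) :=
  block_mx (block_mx m00 m01 m10 m11) (col_mx m02 m12) (row_mx m20 m21) m22.

Lemma b3_mul a00 a01 a02 a10 a11 a12 a20 a21 a22 b00 b01 b02 b10 b11 b12 b20 b21 b22 :
  b3 a00 a01 a02 a10 a11 a12 a20 a21 a22 *m b3 b00 b01 b02 b10 b11 b12 b20 b21 b22 =
  b3 (a00 *m b00 + a01 *m b10 + a02 *m b20) (a00 *m b01 + a01 *m b11 + a02 *m b21)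
     (a00 *m b02 + a01 *m b12 + a02 *m b22)
     (a10 *m b00 + a11 *m b10 + a12 *m b20) (a10 *m b01 + a11 *m b11 + a12 *m b21)
     (a10 *m b02 + a11 *m b12 + a12 *m b22)
     (a20 *m b00 + a21 *m b10 + a22 *m b20) (a20 *m b01 + a21 *m b11 + a22 *m b21)
     (a20 *m b02 + a21 *m b12 + a22 *m b22).
Proof.
rewrite /b3 mulmx_block mulmx_block mul_col_row add_block_mx mul_block_col
  mul_col_mx add_col_mx mul_row_block mul_mx_row add_row_mx mul_row_col.
by [].
Qed.

Lemma b3_add a00 a01 a02 a10 a11 a12 a20 a21 a22 b00 b01 b02 b10 b11 b12 b20 b21 b22 :
  b3 a00 a01 a02 a10 a11 a12 a20 a21 a22 + b3 b00 b01 b02 b10 b11 b12 b20 b21 b22 =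
  b3 (a00 + b00) (a01 + b01) (a02 + b02) (a10 + b10) (a11 + b11) (a12 + b12)
     (a20 + b20) (a21 + b21) (a22 + b22).
Proof. by rewrite /b3 !add_block_mx add_col_mx add_row_mx. Qed.

Lemma b3_opp a00 a01 a02 a10 a11 a12 a20 a21 a22 :
  - b3 a00 a01 a02 a10 a11 a12 a20 a21 a22 =
  b3 (- a00) (- a01) (- a02) (- a10) (- a11) (- a12) (- a20) (- a21) (- a22).
Proof. by rewrite /b3 !opp_block_mx opp_col_mx opp_row_mx. Qed.

Lemma b3_scale (c : R) a00 a01 a02 a10 a11 a12 a20 a21 a22 :
  c *: b3 a00 a01 a02 a10 a11 a12 a20 a21 a22 =
  b3 (c *: a00) (c *: a01) (c *: a02) (c *: a10) (c *: a11) (c *: a12) (c *: a20) (c *: a21) (c *: a22).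
Proof. by rewrite /b3 !scale_block_mx scale_col_mx scale_row_mx. Qed.

Lemma b3_0 : 0 = b3 0 0 0 0 0 0 0 0 0.
Proof. by rewrite /b3 block_mx0 col_mx0 row_mx0 block_mx0. Qed.

Lemma b3_eqP a00 a01 a02 a10 a11 a12 a20 a21 a22 b00 b01 b02 b10 b11 b12 b20 b21 b22 :
  b3 a00 a01 a02 a10 a11 a12 a20 a21 a22 = b3 b00 b01 b02 b10 b11 b12 b20 b21 b22 <->
  (a00 = b00 /\ a01 = b01 /\ a02 = b02 /\ a10 = b10 /\ a11 = b11 /\ a12 = b12
   /\ a20 = b20 /\ a21 = b21 /\ a22 = b22).
Proof.
split; last by move=> [-> [-> [-> [-> [-> [-> [-> [-> ->]]]]]]]].
move/eq_block_mx => [/eq_block_mx [-> -> -> ->] /eq_col_mx [-> ->] /eq_row_mx [-> ->] ->].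
by do !split.
Qed.

Lemma b3_ulsub a00 a01 a02 a10 a11 a12 a20 a21 a22 :
  ulsubmx (b3 a00 a01 a02 a10 a11 a12 a20 a21 a22) = block_mx a00 a01 a10 a11.
Proof. by rewrite /b3 block_mxKul. Qed.
End B3.

Section G.
Variables (R : realFieldType) (p q : nat).
Local Notation n := (p + q)%N.
Local Notation I := (Ib R p q).
Local Notation b3 := (@b3 R n).

Lemma IbT : I^T = I.
Proof. by rewrite /Ib tr_block_mx !trmx0 trmx1 linearN /= trmx1. Qed.

Lemma IbI : I *m I = 1%:M.
Proof.
rewrite /Ib mulmx_block !mulmx0 !mul0mx !addr0 !add0r mulmx1 mulmxN mulmx1 opprK.
by rewrite -scalar_mx_block.
Qed.

Lemma gneg_b3 X : gneg R p q X = b3 0 0 0 X 0 0 0 (-(X^T *m I)) 0.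
Proof. by rewrite /gneg /gm trmx0 mulmx0 oppr0 oppr0 raddf0. Qed.
Lemma gpos_b3 Z : gpos R p q Z = b3 0 Z 0 0 0 (-(I *m Z^T)) 0 0 0.
Proof. by rewrite /gpos /gm trmx0 mul0mx oppr0 oppr0 raddf0. Qed.
Lemma gzero_b3 a A : gzero R p q a A = b3 a%:M 0 0 0 A 0 0 0 (-a)%:M.
Proof. by rewrite /gzero /gm !trmx0 mul0mx mulmx0 oppr0 oppr0. Qed.

Definition Mx (X : 'cV[R]_n) (Z : 'rV[R]_n) : 'M[R]_n := X *m Z - I *m Z^T *m (X^T *m I).

Lemma brXZ X Z : br (gneg R p q X) (gpos R p q Z) =
  b3 (-(pairZX R p q Z X))%:M 0 0 0 (Mx X Z) 0 0 0 (pairZX R p q Z X)%:M.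
Proof.
rewrite /br gneg_b3 gpos_b3 !b3_mul b3_opp b3_add; apply/b3_eqP.
rewrite !(mul0mx, mulmx0, add0r, addr0, oppr0, subr0, sub0r, mulNmx, mulmxN, opprK).
rewrite /pairZX raddfN /= -!mx11_scalar; do !split.
by rewrite -mulmxA (mulmxA I I) IbI mul1mx -trmx_mul [Z *m X]mx11_scalar tr_scalar_mx.
Qed.

Lemma XIIZ X Z : X^T *m I *m (I *m Z^T) = (pairZX R p q Z X)%:M.
Proof.
by rewrite -mulmxA (mulmxA I I) IbI mul1mx -trmx_mul [Z *m X]mx11_scalar tr_scalar_mx.
Qed.

Lemma ZIZ Z : Z *m (I *m Z^T) = (innerW R p q Z Z)%:M.
Proof. by rewrite mulmxA [LHS]mx11_scalar. Qed.

Lemma XIX X : X^T *m I *m X = (innerV R p q X X)%:M.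
Proof. by rewrite [LHS]mx11_scalar. Qed.

Lemma ZX Z X : Z *m X = (pairZX R p q Z X)%:M.
Proof. by rewrite [LHS]mx11_scalar. Qed.


Lemma Mx_IZ X Z : Mx X Z *m (I *m Z^T) =
  innerW R p q Z Z *: X - pairZX R p q Z X *: (I *m Z^T).
Proof.
rewrite /Mx mulmxBl -(mulmxA X) ZIZ mul_mx_scalar -(mulmxA (I *m Z^T)) XIIZ.
by rewrite mul_mx_scalar.
Qed.

Lemma Mx_X X Z : Mx X Z *m X =
  pairZX R p q Z X *: X - innerV R p q X X *: (I *m Z^T).
Proof.
rewrite /Mx mulmxBl -(mulmxA X) (ZX Z X) mul_mx_scalar -(mulmxA (I *m Z^T)) XIX.
by rewrite mul_mx_scalar.
Qed.

Lemma Z_Mx X Z : Z *m Mx X Z =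
  pairZX R p q Z X *: Z - innerW R p q Z Z *: (X^T *m I).
Proof.
rewrite /Mx mulmxBr (mulmxA Z X Z) (ZX Z X) mul_scalar_mx.
by rewrite (mulmxA Z (I *m Z^T)) ZIZ mul_scalar_mx.
Qed.

Lemma XI_Mx X Z : X^T *m I *m Mx X Z =
  innerV R p q X X *: Z - pairZX R p q Z X *: (X^T *m I).
Proof.
rewrite /Mx mulmxBr (mulmxA _ X Z) XIX mul_scalar_mx.
by rewrite (mulmxA _ (I *m Z^T)) XIIZ mul_scalar_mx.
Qed.

Lemma brN m (A B : 'M[R]_m) : br A B = - br B A.
Proof. by rewrite /br opprB. Qed.

Lemma brNl m (A B : 'M[R]_m) : br (- A) B = - br A B.
Proof. by rewrite /br mulNmx mulmxN opprK opprB addrC. Qed.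

Ltac simp3 := rewrite ?(mul0mx, mulmx0, add0r, addr0, oppr0, subr0, sub0r, mulNmx, mulmxN, opprK).

Lemma brXD X M d0 d2 : br (gneg R p q X) (b3 d0%:M 0 0 0 M 0 0 0 d2%:M) =
  b3 0 0 0 (d0 *: X - M *m X) 0 0 0 (d2 *: (X^T *m I) - X^T *m I *m M) 0.
Proof.
rewrite /br gneg_b3 !b3_mul b3_opp b3_add; apply/b3_eqP; simp3.
rewrite mul_mx_scalar mul_scalar_mx; do !split.
by rewrite addrC.
Qed.

Lemma brZD Z M d0 d2 : br (gpos R p q Z) (b3 d0%:M 0 0 0 M 0 0 0 d2%:M) =
  b3 0 (Z *m M - d0 *: Z) 0 0 0 (M *m (I *m Z^T) - d2 *: (I *m Z^T)) 0 0 0.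
Proof.
rewrite /br gpos_b3 !b3_mul b3_opp b3_add; apply/b3_eqP; simp3.
rewrite mul_mx_scalar mul_scalar_mx; do !split.
by rewrite addrC.
Qed.

Definition Ed (d : R) := b3 d%:M 0 0 0 0 0 0 0 (-d)%:M.

Ltac simp3s := rewrite ?(mul0mx, mulmx0, add0r, addr0, oppr0, subr0, sub0r, mulNmx, mulmxN, opprK, scaler0, scaleNr, scalerN, subrr).

Lemma brE_neg d X : br (Ed d) (gneg R p q X) = - (d *: gneg R p q X).
Proof.
rewrite brN /Ed brXD gneg_b3 b3_scale !b3_opp; apply/b3_eqP; simp3s.
by do !split.
Qed.

Lemma brE_pos d Z : br (Ed d) (gpos R p q Z) = d *: gpos R p q Z.
Proof.
rewrite brN /Ed brZD gpos_b3 b3_scale !b3_opp; apply/b3_eqP; simp3s.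
by do !split.
Qed.

Lemma brE_zero d a A : br (Ed d) (gzero R p q a A) = 0.
Proof.
rewrite /br /Ed gzero_b3 !b3_mul b3_opp b3_add b3_0; apply/b3_eqP; simp3s.
by rewrite -!scalar_mxM !(mulrC d) !(mulrC (-d)) !subrr.
Qed.

Section Z.
Variable Z : 'rV[R]_n.
Hypothesis hk : innerW R p q Z Z != 0.
Local Notation k := (innerW R p q Z Z).
Local Notation V := (I *m Z^T).

Lemma gneg0 : gneg R p q 0 = 0.
Proof. by rewrite gneg_b3 trmx0 mul0mx oppr0 -b3_0. Qed.

Lemma entry_sc (a : R) : (a%:M : 'M[R]_1) 0 0 = a.
Proof. by rewrite mxE eqxx mulr1n. Qed.

Lemma C_iff X : Cset R p q Z X <-> X = 0.
Proof.
split; last by move=> ->; rewrite /Cset gneg0 /br mul0mx mulmx0 subrr.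
rewrite /Cset brXZ b3_0 => /b3_eqP [h0 [_ [_ [_ [hM _]]]]].
have hs : pairZX R p q Z X = 0.
  by move: h0 => /(congr1 (fun M : 'M[R]_1 => M 0 0)); rewrite entry_sc mxE => /eqP; rewrite oppr_eq0 => /eqP.
have := congr1 (fun M => M *m V) hM; rewrite /= Mx_IZ mul0mx hs scale0r subr0 => /eqP.
by rewrite scaler_eq0 (negbTE hk) => /eqP.
Qed.

Lemma F_iff X : Fset R p q Z X <-> pairZX R p q Z X = 0 /\ innerV R p q X X = 0.
Proof.
rewrite /Fset brXZ brXD b3_0 Mx_X XI_Mx.
split; last first.
  by move=> [hs hr]; rewrite hs hr oppr0 !scale0r !subrr.
move=> /b3_eqP [_ [_ [_ [h1 _]]]].
have e1 := congr1 (fun M => (Z *m M) 0 0) h1.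
have e2 := congr1 (fun M => (X^T *m I *m M) 0 0) h1.
move: e1 e2; rewrite /= !mulmxBr -!scalemxAr (ZX Z X) ZIZ XIX XIIZ !mulmx0 !mxE eqxx !mulr1n.
set s := pairZX R p q Z X; set r := innerV R p q X X => e1 e2.
have sr : s * r = 0.
  by transitivity (- (- s * r - (s * r - r * s))); [ring | rewrite e2 oppr0].
have two : (2 : R) != 0 by rewrite pnatr_eq0.
move/eqP: sr; rewrite mulf_eq0 => /orP [/eqP hs | /eqP hr].
  split => //; have : r * k = 0.
    by transitivity (- s * s - (s * s - r * k) + 2 * s * s); [ring | rewrite e1 hs !mulr0 addr0].
  by move/eqP; rewrite mulf_eq0 (negbTE hk) orbF => /eqP.
have : 2 * (s * s) = 0.
  by transitivity (- (- s * s - (s * s - r * k))); [rewrite hr; ring | rewrite e1 oppr0].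
move/eqP; rewrite mulf_eq0 (negbTE two) /= mulf_eq0 orbb => /eqP hs; by split.
Qed.

Lemma keyA X : X = (2 / k) *: V -> br (gpos R p q Z) (gneg R p q X) = Ed 2.
Proof.
move=> hX.
have hs : pairZX R p q Z X = 2.
  by rewrite /pairZX hX -scalemxAr ZIZ !mxE eqxx mulr1n divfK.
have hM : Mx X Z = 0.
  rewrite /Mx hX linearZ /= trmx_mul trmxK IbT -!scalemxAl -(mulmxA Z I I) IbI mulmx1.
  by rewrite -scalemxAr subrr.
rewrite brN brXZ hs hM b3_opp /Ed; apply/b3_eqP; rewrite !raddfN /= opprK !oppr0.
by do !split.
Qed.

Lemma T_iff X : Tset R p q Z X <-> X = (2 / k) *: V.
Proof.
split; last first.
  by move=> hX; rewrite /Tset keyA // brE_neg brE_pos.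
move=> [_]; rewrite (brN _ (gpos _ _ _ Z)) brNl brN opprK brXZ brZD gpos_b3 b3_scale.
move=> /b3_eqP [_ [_ [_ [_ [_ [h _]]]]]]; move: h; rewrite Mx_IZ => h.
rewrite -[X]/X.
have := congr1 (fun M => (Z *m M) 0 0) h.
rewrite /= !mulmxBr -!scalemxAr mulmxN (ZX Z X) ZIZ !mxE eqxx !mulr1n.
rewrite -/(pairZX R p q Z X) => e.
set s := pairZX R p q Z X in h e *.
have hs : s = 2.
  have : (s - 2) * k = 0.
    by transitivity (- (k * s - s * k - s * k - 2 * - k)); [ring | rewrite e subrr oppr0].
  by move/eqP; rewrite mulf_eq0 (negbTE hk) orbF subr_eq0 => /eqP.
move: h; rewrite hs => /eqP; rewrite subr_eq scalerN addNr subr_eq0 => /eqP hX.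
by rewrite mulrC -scalerA -hX scalerA mulVf // scale1r.
Qed.
End Z.

Lemma two_neq0 : (2 : R) != 0. Proof. by rewrite pnatr_eq0. Qed.

Lemma Ed_half : 2^-1 *: Ed 2 = Ed 1.
Proof.
rewrite /Ed b3_scale !scaler0 !scale_scalar_mx mulrN mulVf ?two_neq0 //.
Qed.

Lemma grad_Ed1 : is_grading_element R p q (Ed 1).
Proof.
split.
- exists 1, 0, 0, 0; split; first by rewrite /so_pq trmx0 mul0mx mulmx0 addr0.
  rewrite /gm !trmx0 mulmx0 mul0mx !oppr0. by rewrite /Ed /b3.
- by move=> X; rewrite brE_neg scale1r.
- by move=> a A _; rewrite brE_zero.
- by move=> Z; rewrite brE_pos scale1r.
Qed.

Lemma actV_Ed2 v : actV R p q (Ed 2) v = (-2) *: v.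
Proof. by rewrite /actV brE_neg gneg_b3 b3_scale b3_opp b3_ulsub block_mxKdl scaleNr. Qed.

Lemma actW_Ed2 z : actW R p q (Ed 2) z = 2 *: z.
Proof. by rewrite /actW brE_pos gpos_b3 b3_scale b3_ulsub block_mxKur. Qed.

Lemma cW_Ed2 i k : cW R p q (Ed 2) i k = 2 * (k == i)%:R.
Proof. by rewrite /cW actW_Ed2 !mxE eqxx. Qed.

Lemma rhoV_Ed2 : rhoV R p q (Ed 2) = (-2)%:M.
Proof.
apply/matrixP => i j; rewrite mxE actV_Ed2 !mxE eqxx andbT.
by case: (i == j); rewrite ?mulr1 ?mulr0.
Qed.

Lemma sumW (W : lmodType R) (f : 'I_n -> W) k :
  \sum_i cW R p q (Ed 2) i k *: f i = 2 *: f k.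
Proof.
rewrite (bigD1 k) //= big1 ?addr0; first by rewrite cW_Ed2 eqxx mulr1.
by move=> i ne; rewrite cW_Ed2 eq_sym (negbTE ne) mulr0 scale0r.
Qed.

Lemma sumR (f : 'I_n -> R) k :
  \sum_i cW R p q (Ed 2) i k * f i = 2 * f k.
Proof.
rewrite (bigD1 k) //= big1 ?addr0; first by rewrite cW_Ed2 eqxx mulr1.
by move=> i ne; rewrite cW_Ed2 eq_sym (negbTE ne) mulr0 mul0r.
Qed.

Lemma act4_Ed2 t : act4 R p q (Ed 2) t = 4 *: t.
Proof.
apply/ffunP => [[k l]]; rewrite !ffunE /= sumW sumW rhoV_Ed2 mul_scalar_mx mul_mx_scalar.
by rewrite subrr addr0 -scalerDl -natrD.
Qed.

Lemma act3_Ed2 t : act3 R p q (Ed 2) t = 6 *: t.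
Proof.
apply/ffunP => [[[k l] m]]; rewrite !ffunE /= sumR sumR sumR.
by rewrite -!mulrDl -!natrD.
Qed.
End G.

Section Lin2.
Variables (R : realFieldType) (V : lmodType R).

Lemma diag_c (W : V -> Prop) (f : V -> V) (c : R) :
  (forall v, f v = c *: v) -> diagonalizable_on W f.
Proof.
move=> hf w Ww; exists [:: (c, w)]; split; last by rewrite big_seq1.
by move=> x; rewrite inE => /eqP -> /=; split.
Qed.

Lemma eig0 (W : V -> Prop) (f : V -> V) (c : R) (P : R -> bool) :
  0 < c -> (forall v, f v = c *: v) -> (forall l, P l -> l <= 0) ->
  forall w, eigen_sum P W f w <-> w = 0.
Proof.
move=> hc hf hP w; split; last by move=> ->; exists [::]; split => //; rewrite big_nil.
move=> [s [hs ->]]; rewrite big_seq big1 // => x xs.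
have [_ e Pl] := hs x xs; move: e; rewrite hf => /eqP.
rewrite -subr_eq0 -scalerBl scaler_eq0 subr_eq0 => /orP [/eqP ec|/eqP //].
by have := hP _ Pl; rewrite -ec leNgt hc.
Qed.
End Lin2.

Theorem lemma3p4 (R : realFieldType) (p q : nat) (Z : 'rV[R]_(p + q)) :
  (3 <= p + q)%N -> innerW R p q Z Z != 0 ->
  [/\
   (* (1) *)
   [/\ (forall X, Cset R p q Z X <-> X = 0),
    (forall X, Cset R p q Z X -> Fset R p q Z X),
    (forall X, Fset R p q Z X <-> pairZX R p q Z X = 0 /\ innerV R p q X X = 0)
    & forall X, Tset R p q Z X <->
              X = (2 / innerW R p q Z Z) *: (Ib R p q *m Z^T)],
   (* (2), on g_{-1} *)
   (forall X, Tset R p q Z X ->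
      let A := br (gpos R p q Z) (gneg R p q X) in
      [/\ is_grading_element R p q (2^-1 *: A),
          diagonalizable_on (fun _ => True) (actV R p q A),
          (forall (l : R) (v : 'cV[R]_(p + q)),
              v != 0 -> actV R p q A v = l *: v -> l <= 0) &
          (forall v, actV R p q A v = 0 <-> Cset R p q Z v)]),
   (* (2), on the Weyl-tensor components, n >= 4 *)
   ((4 <= p + q)%N ->
    forall W : tens4 R (p + q) -> Prop,
      harmonic_component p q (act4 R p q) (weyl_tensor R p q) W ->
      (forall X, Tset R p q Z X ->
         let A := br (gpos R p q Z) (gneg R p q X) in
         diagonalizable_on W (act4 R p q A) /\
         (forall w, W_ss W (act4 R p q A) w <-> w = 0)) /\
      (forall w, (forall X, Tset R p q Z X ->
                   W_st W (act4 R p q (br (gpos R p q Z) (gneg R p q X))) w)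
                 <-> w = 0)) &
   (* (2), on the Cotton-York tensors, n = 3 *)
   (p + q = 3)%N ->
    forall W : tens3 R (p + q) -> Prop,
      harmonic_component p q (act3 R p q) (cy_tensor R p q) W ->
      (forall X, Tset R p q Z X ->
         let A := br (gpos R p q Z) (gneg R p q X) in
         diagonalizable_on W (act3 R p q A) /\
         (forall w, W_ss W (act3 R p q A) w <-> w = 0)) /\
      (forall w, (forall X, Tset R p q Z X ->
                   W_st W (act3 R p q (br (gpos R p q Z) (gneg R p q X))) w)
                 <-> w = 0)].
Proof.
move=> h3 hk.
have hA : forall X, Tset R p q Z X -> br (gpos R p q Z) (gneg R p q X) = Ed R p q 2.
  by move=> X /(T_iff R p q Z hk); exact: (keyA R p q Z hk).
have X0T := (iffRL (T_iff R p q Z hk _) erefl).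
have two := two_neq0 R.
split.
- split; [exact: C_iff R p q Z hk | | exact: F_iff R p q Z hk | exact: T_iff R p q Z hk].
  by move=> X; rewrite /Cset /Fset => ->; rewrite /br mulmx0 mul0mx subrr.
- move=> X hX; cbv zeta; rewrite (hA X hX); split.
  + by rewrite Ed_half; apply: grad_Ed1.
  + by apply: diag_c; apply: actV_Ed2.
  + move=> l v nz; rewrite actV_Ed2 => /eqP.
    rewrite -subr_eq0 -scalerBl scaler_eq0 (negbTE nz) orbF subr_eq0 => /eqP <-.
    by rewrite oppr_le0 ler0n.
  + move=> v; rewrite actV_Ed2 (C_iff R p q Z hk); split => [/eqP|->]; last by rewrite scaler0.
    by rewrite scaler_eq0 oppr_eq0 (negbTE two) => /eqP.
- move=> _ W _; split.
  + move=> X hX; cbv zeta; rewrite (hA X hX); split; first by apply: diag_c; apply: act4_Ed2.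
    move=> w; apply: (eig0 _ _ W _ 4 _ _ (act4_Ed2 _ _ _)); first by rewrite ltr0n.
    by move=> l; apply: ltW.
  + move=> w; split; last by move=> -> X _; exists [::]; split => //; rewrite big_nil.
    move=> h; have := h _ X0T; rewrite (hA _ X0T).
    apply: (iffLR (eig0 _ _ W _ 4 _ _ (act4_Ed2 _ _ _) _ w)); first by rewrite ltr0n.
    done.
- move=> _ W _; split.
  + move=> X hX; cbv zeta; rewrite (hA X hX); split; first by apply: diag_c; apply: act3_Ed2.
    move=> w; apply: (eig0 _ _ W _ 6 _ _ (act3_Ed2 _ _ _)); first by rewrite ltr0n.
    by move=> l; apply: ltW.
  + move=> w; split; last by move=> -> X _; exists [::]; split => //; rewrite big_nil.
    move=> h; have := h _ X0T; rewrite (hA _ X0T).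
    apply: (iffLR (eig0 _ _ W _ 6 _ _ (act3_Ed2 _ _ _) _ w)); first by rewrite ltr0n.
    done.
Qed.
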